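(* Under the standing assumptions, let $u^0\in\operatorname{dom}(J)$ with $|u^0|_H=1$, and let sequences $(u^k)$, $(u^{k+1/2})$, $(\zeta^k)$ be generated by the inverse power method $$\zeta^k\in\partial H(u^k),\qquad u^{k+1/2}\in\partial J^*(\zeta^k),\qquad u^{k+1}=\frac{u^{k+1/2}}{|u^{k+1/2}|_H},$$ where it is assumed that each step is well defined and $u^{k+1/2}\ne0$ for all $k$. Then $R_*(\zeta^k)\le R_*(\zeta^{k+1})$ for all $k\in\mathbb N$. (No homogeneity of $J$ is required.)
   Context: Standing assumptions: $X$ is a real reflexive Banach space with dual $X^*$ and duality pairing $\langle\cdot,\cdot\rangle$; $\Gamma_0(X)$ is the class of proper, lower semi-continuous, convex functionals $X\to\mathbb{R}\cup\{+\infty\}$. Fix $1<p<\infty$ and $q=\frac{p}{p-1}$. Let $J\in\Gamma_0(X)$, and let $H\in\Gamma_0(X)$ be absolutely $p$-homogeneous ($H(tu)=|t|^pH(u)$) such that $|u|_H:=(pH(u))^{1/p}$ is a norm on $X$, so $H(u)=\frac1p|u|_H^p$. The dual norm is $|\zeta|_{H^*}=\sup_{u\ne0}\langle\zeta,u\rangle/|u|_H$, and $H^*(\zeta)=\frac1q|\zeta|_{H^*}^q$. The Fenchel conjugate is $J^*(\zeta)=\sup_{u\in X}\langle\zeta,u\rangle-J(u)$ and the subdifferential is $\partial J(u)=\{\zeta\in X^*:\ J(u)+\langle\zeta,v-u\rangle\le J(v)\ \forall v\in X\}$. Growth assumption: there is $c>0$ with $H(u)\le cJ(u)$ for all $u\in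 X$. The dual Rayleigh quotient is $R_*(\zeta)=J^*(\zeta)/H^*(\zeta)$ for $\zeta\ne0$. $\operatorname{dom}(J)=\{u:J(u)<\infty\}$. *)

(* Defs.v *)
From HB Require Import structures.
From mathcomp Require Import all_boot all_order all_algebra.
From mathcomp Require Import all_classical all_reals all_analysis.
Set Implicit Arguments. Unset Strict Implicit. Unset Printing Implicit Defensive.
Import Order.TTheory GRing.Theory Num.Theory.
Import numFieldNormedType.Exports.
Local Open Scope classical_set_scope.
Local Open Scope ring_scope.

Section Defs.
Context {R : realType} {X : completeNormedModType R}.

Definition dual_elt (f : X -> R) : Prop :=
  (forall (a : R) (x y : X), f (a *: x + y) = a * f x + f y) /\ continuous f.

Definition dual_norm (f : X -> R) : R :=
  sup [set `|f x| | x in [set x : X | `|x| <= 1]].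

Definition reflexive_space : Prop :=
  forall phi : (X -> R) -> R,
    (forall (a : R) f g, dual_elt f -> dual_elt g ->
       phi (fun x => a * f x + g x) = a * phi f + phi g) ->
    (exists C : R, forall f, dual_elt f -> `|phi f| <= C * dual_norm f) ->
    exists x : X, forall f, dual_elt f -> phi f = f x.

Local Open Scope ereal_scope.

Definition proper_fun (F : X -> \bar R) : Prop :=
  (exists u, F u < +oo) /\ (forall u, -oo < F u).

Definition convex_fun (F : X -> \bar R) : Prop :=
  forall (u v : X) (t : R), (0 < t < 1)%R ->
    F (t *: u + (1 - t) *: v)%R <= t%:E * F u + (1 - t)%:E * F v.

Definition Gamma0 (F : X -> \bar R) : Prop :=
  proper_fun F /\ lower_semicontinuous F /\ convex_fun F.

Definition fconj (F : X -> \bar R) (zeta : X -> R) : \bar R :=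
  ereal_sup [set (zeta u)%:E - F u | u in [set: X]].

Definition subdiff (F : X -> \bar R) (u : X) (zeta : X -> R) : Prop :=
  dual_elt zeta /\ forall v : X, F u + (zeta (v - u)%R)%:E <= F v.

(* w \in \partial G(zeta) for G : X^* -> \bar R, with X^** identified with X *)
Definition subdiff_dual (G : (X -> R) -> \bar R) (zeta : X -> R) (w : X) : Prop :=
  forall eta : X -> R, dual_elt eta -> G zeta + (eta w - zeta w)%R%:E <= G eta.

Definition Hnorm (H : X -> \bar R) (p : R) (u : X) : R :=
  powR (p * fine (H u))%R p^-1.

Definition Rstar (J H : X -> \bar R) (zeta : X -> R) : \bar R :=
  fconj J zeta / fconj H zeta.

End Defs.

(* Main.v *)
Require Import Defs.
From HB Require Import structures.
From mathcomp Require Import all_boot all_order all_algebra.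
From mathcomp Require Import all_classical all_reals all_analysis.
From mathcomp Require Import ring lra.
Import Order.TTheory GRing.Theory Num.Theory.
Import numFieldNormedType.Exports.
Local Open Scope classical_set_scope.
Local Open Scope ring_scope.

Lemma scal_eq1 (R : realType) (p a : R) : 1 < p ->
  (forall l, 0 < l -> (l - 1) * (l * a) <= (l - 1) * (l * l `^ (p - 1))) -> a = 1.
Proof.
move=> p1 key.
have p0 : 0 < p - 1 by rewrite subr_gt0.
set r := (p - 1)^-1.
have r0 : 0 < r by rewrite invr_gt0.
have e1 : (1:R) `^ r = 1 by rewrite powR1.
have pw : forall b, 0 <= b -> (b `^ r) `^ (p - 1) = b.
  by move=> b b0; rewrite -powRrM mulVf ?gt_eqF// powRr1.
have up : forall l, 1 < l -> a <= l `^ (p - 1).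
  move=> l l1; have l0 : 0 < l by apply: lt_trans l1.
  have := key l l0; rewrite ler_pM2l ?subr_gt0// ler_pM2l//.
have lo : forall l, 0 < l -> l < 1 -> l `^ (p - 1) <= a.
  move=> l l0 l1; have := key l l0; rewrite ler_nM2l ?subr_lt0// ler_pM2l//.
apply/eqP; rewrite eq_le; apply/andP; split.
  rewrite leNgt; apply/negP => a1.
  set b := (1 + a) / 2.
  have b1 : 1 < b by rewrite /b ltr_pdivlMr //; lra.
  have ba : b < a by rewrite /b ltr_pdivrMr //; lra.
  have l1 : 1 < b `^ r.
    by rewrite -[X in X < _]e1 (gt0_ltr_powR r0) // nnegrE; lra.
  have := up _ l1; rewrite pw; [lra|lra].
rewrite leNgt; apply/negP => a1.
have [a0|a0] := lerP a 0.
  have l0 : (0:R) < 2^-1 by rewrite invr_gt0; lra.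
  have l1 : (2:R)^-1 < 1 by rewrite invf_lt1; lra.
  have := lo _ l0 l1; have := powR_gt0 (p - 1) l0; lra.
set b := (1 + a) / 2.
have b1 : b < 1 by rewrite /b ltr_pdivrMr //; lra.
have ba : a < b by rewrite /b ltr_pdivlMr //; lra.
have l0 : 0 < b `^ r by apply: powR_gt0; lra.
have l1 : b `^ r < 1.
  by rewrite -[X in _ < X]e1 (gt0_ltr_powR r0) // nnegrE; lra.
have := lo _ l0 l1; rewrite pw; lra.
Qed.

Lemma dual_lin (R : realType) (X : completeNormedModType R) (z : X -> R) :
  dual_elt z ->
  [/\ z 0 = 0, (forall a x, z (a *: x) = a * z x) &
      (forall x y, z (x - y) = z x - z y)].
Proof.
case=> lin _.
have z0 : z 0 = 0.
  have := lin 1 0 0; rewrite scaler0 addr0 mul1r; lra.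
split => //.
  by move=> a x; have := lin a x 0; rewrite addr0 z0 addr0.
move=> x y; have := lin (-1) y x.
by rewrite scaleN1r addrC => ->; rewrite mulN1r addrC.
Qed.

Lemma H_ge0 (R : realType) (X : completeNormedModType R) (p : R) (H : X -> \bar R) :
  0 < p -> convex_fun H ->
  (forall (t : R) (v : X), H (t *: v) = ((`|t| `^ p)%:E * H v)%E) ->
  (forall v : X, H v \is a fin_num) -> forall w, 0 <= fine (H w).
Proof.
move=> p0 cvx hom fin w.
have h2 : (0 < (2^-1 : R) < 1)%R by apply/andP; split; [rewrite invr_gt0|rewrite invf_lt1]; lra.
have := cvx w (- w) (2^-1) h2.
have -> : 2^-1 *: w + (1 - 2^-1) *: - w = 0 *: w.
  rewrite scale0r scalerN; have -> : (1 - 2^-1 : R) = 2^-1 by field.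
  by rewrite subrr.
have hN : H (- w) = H w.
  by rewrite -scaleN1r hom normrN normr1 powR1 mul1e.
rewrite hN hom normr0 powR0 ?gt_eqF// mul0e.
rewrite -(fineK (fin w)) -!EFinM -EFinD lee_fin; lra.
Qed.

Lemma H_unit (R : realType) (X : completeNormedModType R) (p : R) (H : X -> \bar R) :
  0 < p -> (forall v : X, H v \is a fin_num) -> (forall w, 0 <= fine (H w)) ->
  forall w, Hnorm H p w = 1 -> H w = (p^-1)%:E.
Proof.
move=> p0 fin Hge w; rewrite /Hnorm => h1.
have e : p * fine (H w) = 1.
  have := congr1 (fun x => x `^ p) h1.
  have e1 : (1:R) `^ p = 1 by rewrite powR1.
  by rewrite /= -powRrM mulVf ?gt_eqF // powRr1 ?mulr_ge0 ?(ltW p0) // e1.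
rewrite -(fineK (fin w)); f_equal.
by rewrite -[p^-1]mulr1 -e mulKf ?gt_eqF.
Qed.

Lemma sub_unit1 (R : realType) (X : completeNormedModType R) (p : R) (H : X -> \bar R)
  (u : X) (z : X -> R) :
  1 < p -> (forall v : X, H v \is a fin_num) -> (forall w, 0 <= fine (H w)) ->
  (forall (t : R) (v : X), H (t *: v) = ((`|t| `^ p)%:E * H v)%E) ->
  subdiff H u z -> Hnorm H p u = 1 -> z u = 1.
Proof.
move=> p1 fin Hge hom [dz sub] nu.
have p0 : 0 < p by lra.
have [z0 zs zB] := @dual_lin _ _ _ dz.
have Hu := @H_unit _ _ _ _ p0 fin Hge _ nu.
apply: (@scal_eq1 _ _ _ p1) => l l0.
have := sub (l *: u); rewrite zB zs hom Hu ger0_norm ?(ltW l0) // -EFinD -EFinM lee_fin => h.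
set P := l `^ p.
have lP : l * l `^ (p - 1) = P by rewrite mulr_powRB1 ?(ltW l0).
rewrite lP.
have P0 : 0 < P by rewrite powR_gt0.
have QP : (l^-1) `^ p = P^-1.
  have e1 : (1:R) `^ p = 1 by rewrite powR1.
  have hPQ : (l^-1) `^ p * P = 1.
    by rewrite /P -powRM ?invr_ge0 ?(ltW l0) // mulVf ?gt_eqF // e1.
  by rewrite -[LHS]mulr1 -(mulfV (lt0r_neq0 P0)) mulrA hPQ mul1r.
have q0 : 0 < p / (p - 1) by apply: divr_gt0; lra.
have li0 : 0 <= l^-1 by rewrite invr_ge0 ltW.
have pq : p^-1 + (p / (p - 1))^-1 = 1 by field; lra.
have y := @conjugate_powR R (l^-1) 1 p (p / (p - 1)) li0 ler01 p0 q0 pq.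
have e1 : (1:R) `^ (p / (p - 1)) = 1 by rewrite powR1.
rewrite e1 QP mulr1 in y.
rewrite -/P in h.
have y' : P <= l * p^-1 + l * P * ((p - 1) / p).
  have := ler_wpM2l (ltW (mulr_gt0 l0 P0)) y.
  have -> : l * P * l^-1 = P by field; rewrite gt_eqF.
  have -> : l * P * (P^-1 / p + 1 / (p / (p - 1))) = l * p^-1 + l * P * ((p - 1) / p).
    by field; rewrite !gt_eqF //; lra.
  done.
have h' := ler_wpM2l (ltW l0) h.
set a := z u in h' *.
have e2 : l * P * ((p - 1) / p) = l * P - l * P * p^-1 by field; rewrite gt_eqF.
rewrite e2 in y'.
nra.
Qed.

Lemma sub_le1 (R : realType) (X : completeNormedModType R) (p : R) (H : X -> \bar R)
  (u w : X) (z : X -> R) :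
  1 < p -> (forall v : X, H v \is a fin_num) -> (forall w, 0 <= fine (H w)) ->
  (forall (t : R) (v : X), H (t *: v) = ((`|t| `^ p)%:E * H v)%E) ->
  subdiff H u z -> Hnorm H p u = 1 -> Hnorm H p w = 1 -> z w <= 1.
Proof.
move=> p1 fin Hge hom sd nu nw.
have p0 : 0 < p by lra.
have zu := @sub_unit1 _ _ _ _ _ _ p1 fin Hge hom sd nu.
case: sd => dz sub.
have [z0 zs zB] := @dual_lin _ _ _ dz.
have := sub w; rewrite zB zu (@H_unit _ _ _ _ p0 fin Hge _ nu) (@H_unit _ _ _ _ p0 fin Hge _ nw).
rewrite -EFinD lee_fin; lra.
Qed.

Lemma conjH_val (R : realType) (X : completeNormedModType R) (p : R) (H : X -> \bar R)
  (u : X) (z : X -> R) :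
  1 < p -> (forall v : X, H v \is a fin_num) -> (forall w, 0 <= fine (H w)) ->
  (forall (t : R) (v : X), H (t *: v) = ((`|t| `^ p)%:E * H v)%E) ->
  subdiff H u z -> Hnorm H p u = 1 -> fconj H z = (1 - p^-1)%:E.
Proof.
move=> p1 fin Hge hom sd nu.
have p0 : 0 < p by lra.
have zu := @sub_unit1 _ _ _ _ _ _ p1 fin Hge hom sd nu.
have Hu := @H_unit _ _ _ _ p0 fin Hge _ nu.
case: sd => dz sub.
have [z0 zs zB] := @dual_lin _ _ _ dz.
apply/eqP; rewrite eq_le; apply/andP; split.
  apply/ereal_supP => y [w _ <-].
  have := sub w; rewrite zB zu Hu -(fineK (fin w)) -!EFinD !lee_fin; lra.
apply: ereal_sup_ubound; exists u => //.
by rewrite zu Hu -EFinD.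
Qed.

Theorem lemma3p1 (R : realType) (X : completeNormedModType R)
  (p : R) (J H : X -> \bar R) (c : R)
  (u uh : nat -> X) (zeta : nat -> X -> R) :
  reflexive_space (X := X) ->
  1 < p ->
  Gamma0 J -> Gamma0 H ->
  (* H absolutely p-homogeneous *)
  (forall (t : R) (v : X), H (t *: v) = ((`|t| `^ p)%:E * H v)%E) ->
  (* |.|_H := (p H(.))^(1/p) is a (finite) norm on X *)
  (forall v : X, H v \is a fin_num) ->
  (forall v : X, Hnorm H p v = 0 -> v = 0) ->
  (forall (a : R) (v : X), Hnorm H p (a *: v) = `|a| * Hnorm H p v) ->
  (forall v w : X, Hnorm H p (v + w) <= Hnorm H p v + Hnorm H p w) ->
  (* growth assumption *)
  0 < c -> (forall v : X, (H v <= c%:E * J v)%E) ->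
  (* initial point *)
  (J (u 0%N) < +oo)%E -> Hnorm H p (u 0%N) = 1 ->
  (* inverse power method iterates *)
  (forall k, subdiff H (u k) (zeta k)) ->
  (forall k, subdiff_dual (fconj J) (zeta k) (uh k)) ->
  (forall k, uh k <> 0) ->
  (forall k, u k.+1 = (Hnorm H p (uh k))^-1 *: uh k) ->
  forall k : nat, (Rstar J H (zeta k) <= Rstar J H (zeta k.+1))%E.
Proof.
move=> _ p1 _ [_ [_ cvxH]] hom fin ndef nhom _ _ _ _ nu0 sdH sdJ uh0 uk.
have p0 : 0 < p by lra.
have Hge := @H_ge0 _ _ _ _ p0 cvxH hom fin.
have tpos : forall k, 0 < Hnorm H p (uh k).
  move=> k; rewrite lt0r powR_ge0 andbT; apply/negP => /eqP /ndef H0; exact: uh0 H0.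
have nu : forall k, Hnorm H p (u k) = 1.
  case => // k; rewrite uk nhom ger0_norm ?invr_ge0 ?ltW ?tpos //.
  by rewrite mulVf ?gt_eqF ?tpos.
move=> k.
rewrite /Rstar (@conjH_val _ _ _ _ _ _ p1 fin Hge hom (sdH k) (nu k)).
rewrite (@conjH_val _ _ _ _ _ _ p1 fin Hge hom (sdH k.+1) (nu k.+1)).
have hp : 0 < 1 - p^-1 by rewrite subr_gt0 invf_lt1.
apply: lee_wpmul2r; first by rewrite inver (gt_eqF hp) lee_fin invr_ge0 ltW.
set t := Hnorm H p (uh k).
have vE : uh k = t *: u k.+1 by rewrite uk scalerA mulfV ?scale1r // gt_eqF ?tpos.
have [z0 zs zB] := @dual_lin _ _ _ (sdH k).1.
have [z0' zs' zB'] := @dual_lin _ _ _ (sdH k.+1).1.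
have h1 := @sub_unit1 _ _ _ _ _ _ p1 fin Hge hom (sdH k.+1) (nu k.+1).
have h2 := @sub_le1 _ _ _ _ _ _ _ p1 fin Hge hom (sdH k) (nu k) (nu k.+1).
have := sdJ k (zeta k.+1) (sdH k.+1).1.
move=> h; apply: le_trans h; apply: lee_paddr => //.
rewrite lee_fin subr_ge0 vE zs zs' h1 mulr1.
by rewrite ger_pMr ?tpos.
Qed.
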